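(* Let $G$ be a simple stochastic game, $A$ a subset of its arcs, and $\sigma,\sigma'$ positional MAX strategies. Then $v^{G}_{\sigma'|_A \sigma}(x) = v^{G[A,\sigma]}_{\sigma'}(x)$ for every vertex $x$ of $G$.
   Context: A simple stochastic game (SSG) $G$ is a finite directed graph whose vertex set is partitioned into MAX vertices, MIN vertices, random vertices and a nonempty set of sinks; every non-sink vertex has at least one outgoing arc, every sink has exactly one outgoing arc, a self-loop; each random vertex $x$ carries a rational probability distribution $p_x$ on its out-neighbourhood, positive on every out-neighbour; each sink $s$ has rational value $\mathrm{Val}(s)\in[0,1]$. A history is a finite directed path; a general MAX (resp. MIN) strategy maps each history ending in a MAX (resp. MIN) vertex $x$ to an out-neighbour of $x$; it is positional if it depends only on the last vertex. Under strategies $\sigma,\tau$ from start $x_0$, the random play is built step by step: at a MAX (MIN) vertex the next vertex is $\sigma$ (resp. $\tau$) applied to the history so far, at a random vertex $x$ it is drawn according to $p_x$ independently, and at a sink the play stays there. The play's value is $\mathrm{Val}(s)$ if it reaches sink $s$, else $0$; $v^G_{\sigma,\tau}(x_0)$ is its expectation. For a MAX strategy $\sigma$, $v^G_\sigma$ is the value $v^G_{\sigma,\tau}$ under a best response $\tau$, i.e. a MIN strategy with $v_{\sigma,\tau}\le v_{\sigma,\tau'}$ pointwise for all general MIN strategies $\tau'$ (for positional $\sigma$ a positional best response exists). Concatenation: for MAX strategies $\sigma,\sigma'$ and a set $A$ of arcs, $\sigma'|_A\sigma$ is the (generally non-positional) MAX strategy that plays like $\sigma'$ until an arc of $A$ is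 crossed, and from then on plays like $\sigma$. Transformed game: $G[A,\sigma]$ is obtained from a copy of $G$ by replacing each arc $e=(x,y)\in A$ by an arc $(x,s_e)$ to a new sink $s_e$ of value $v^G_\sigma(y)$ (for random $x$, $p_x(s_e)=p_x(y)$); $y$ is kept. Positional strategies of $G$ are identified with those of $G[A,\sigma]$ (a MAX vertex $x$ with $\sigma'(x)=y$, $(x,y)\in A$, moves to $s_{(x,y)}$). *)

(* Defs.v *)
From HB Require Import structures.
From mathcomp Require Import all_boot all_order all_algebra.
From mathcomp Require Import all_classical all_reals.
Set Implicit Arguments. Unset Strict Implicit. Unset Printing Implicit Defensive.
Import Order.TTheory GRing.Theory Num.Theory.
Local Open Scope ring_scope.
Local Open Scope classical_set_scope.

Inductive vkind := VMax | VMin | VRand | VSink.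

(** A game on the finite vertex type [V], with numeric data in [K]:
    kind of each vertex, the arc relation, the probabilities [prob x y]
    (used only for random [x] and arcs [(x,y)]) and sink values
    (used only for sinks). *)
Record game (K : Type) (V : finType) := Game {
  kind : V -> vkind;
  arc  : rel V;
  prob : V -> V -> K;
  sval : V -> K }.

Definition ssg (V : finType) := game rat V.

Definition ssg_wf (V : finType) (G : ssg V) : Prop :=
  [/\ exists s, kind G s = VSink,
      forall x, kind G x <> VSink -> exists y, arc G x y,
      forall s, kind G s = VSink -> forall y, arc G s y = (y == s),
      forall x, kind G x = VRand ->
        (forall y, arc G x y -> 0 < prob G x y) /\
        \sum_(y | arc G x y) prob G x y = 1
    & forall s, kind G s = VSink -> 0 <= sval G s <= 1].

Definition arcs (K : Type) (V : finType) (G : game K V) : {set V * V} :=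
  [set e | arc G e.1 e.2].

Definition realize (R : realType) (V : finType) (G : ssg V) : game R V :=
  Game (kind G) (arc G) (fun x y => ratr (prob G x y)) (fun x => ratr (sval G x)).

(** General strategies: a history [x0 :: s] (a finite directed path
    x0, s_1, ..., s_k) is represented by its start [x0] and the list [s];
    its last vertex is [last x0 s]. *)
Definition strategy (V : finType) := V -> seq V -> V.

Definition max_strategy (K : Type) (V : finType) (G : game K V) (st : strategy V) :=
  forall x0 s, path (arc G) x0 s -> kind G (last x0 s) = VMax ->
    arc G (last x0 s) (st x0 s).

Definition min_strategy (K : Type) (V : finType) (G : game K V) (st : strategy V) :=
  forall x0 s, path (arc G) x0 s -> kind G (last x0 s) = VMin ->
    arc G (last x0 s) (st x0 s).

Definition pos_max_strategy (K : Type) (V : finType) (G : game K V) (st : V -> V) :=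
  forall x, kind G x = VMax -> arc G x (st x).

Definition positional (V : finType) (st : V -> V) : strategy V :=
  fun x0 s => st (last x0 s).

Definition trans (R : realType) (V : finType) (G : game R V)
    (sigma tau : strategy V) (x0 : V) (s : seq V) (y : V) : R :=
  let cur := last x0 s in
  match kind G cur with
  | VMax => (sigma x0 s == y)%:R
  | VMin => (tau x0 s == y)%:R
  | VRand => if arc G cur y then prob G cur y else 0
  | VSink => (y == cur)%:R
  end.

(** Probability that the random play from [x0] starts with [x0 :: pre ++ s],
    given that it starts with [x0 :: pre]. *)
Fixpoint hprob (R : realType) (V : finType) (G : game R V)
    (sigma tau : strategy V) (x0 : V) (pre s : seq V) : R :=
  match s with
  | [::] => 1
  | y :: s' => trans G sigma tau x0 pre y * hprob G sigma tau x0 (rcons pre y) s'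
  end.

Definition sink_pay (R : realType) (V : finType) (G : game R V) (x : V) : R :=
  if kind G x is VSink then sval G x else 0.

Definition value_at (R : realType) (V : finType) (G : game R V)
    (sigma tau : strategy V) (x0 : V) (n : nat) : R :=
  \sum_(s : n.-tuple V) hprob G sigma tau x0 [::] s * sink_pay G (last x0 s).

(** Since sinks are
    absorbing, the play reaches sink t iff it is at t at some (all large)
    time n, so the expectation is the (monotone) limit, i.e. the supremum,
    of [value_at n]. *)
Definition play_value (R : realType) (V : finType) (G : game R V)
    (sigma tau : strategy V) (x0 : V) : R :=
  sup (range (value_at G sigma tau x0)).

Definition max_value (R : realType) (V : finType) (G : game R V)
    (sigma : strategy V) (x0 : V) : R :=
  inf [set v | exists tau, min_strategy G tau /\ v = play_value G sigma tau x0].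

Definition hist_arcs (V : finType) (x0 : V) (s : seq V) : seq (V * V) :=
  zip (x0 :: s) s.

Definition concat_strat (V : finType) (A : {set V * V}) (sigma' sigma : V -> V)
    : strategy V :=
  fun x0 s => if has (fun e => e \in A) (hist_arcs x0 s)
              then sigma (last x0 s) else sigma' (last x0 s).

(** Vertices of G[A, sigma]: old vertices and one new sink per arc of A. *)
Definition tvert (V : finType) (A : {set V * V}) : finType :=
  (V + {e : V * V | e \in A})%type.

(** The transformed game G[A, w] where w y = v^G_sigma(y). *)
Definition transform (R : realType) (V : finType) (G : game R V)
    (A : {set V * V}) (w : V -> R) : game R (tvert A) :=
  Game
    (fun u : tvert A => match u with inl x => kind G x | inr _ => VSink end)
    (fun u v : tvert A => match u, v with
       | inl x, inl y => arc G x y && ((x, y) \notin A)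
       | inl x, inr e => (proj1_sig e).1 == x
       | inr e, inr e' => e == e'
       | inr _, inl _ => false end)
    (fun u v : tvert A => match u, v with
       | inl x, inl y => prob G x y
       | inl x, inr e => if (proj1_sig e).1 == x then prob G x (proj1_sig e).2 else 0
       | _, _ => 0 end)
    (fun u : tvert A => match u with
       | inl x => sval G x
       | inr e => w (proj1_sig e).2 end).

Definition lift_pos (V : finType) (A : {set V * V}) (st : V -> V) : tvert A -> tvert A :=
  fun u => match u with
  | inl x => match insub (x, st x) with Some e => inr e | None => inl (st x) end
  | inr e => inr e end.
Arguments lift_pos {V} A st u.

(* Main.v *)
Require Import Defs.
From mathcomp Require Import all_boot all_order all_algebra.
From mathcomp Require Import all_classical all_reals.
Require Import Defs.
Set Implicit Arguments. Unset Strict Implicit. Unset Printing Implicit Defensive.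
Import Order.TTheory GRing.Theory Num.Theory.

Section Gen.
Local Open Scope ring_scope.
Local Open Scope classical_set_scope.
Variables (R : realType) (W : finType) (H : game R W).

Definition good := [/\ forall x y, kind H x = VRand -> arc H x y -> 0 <= prob H x y,
   forall x, kind H x = VRand -> \sum_y (if arc H x y then prob H x y else 0) = 1
   & forall x, kind H x = VSink -> 0 <= sval H x <= 1].

Fixpoint Vr (s t : strategy W) (n : nat) (x0 : W) (pre : seq W) : R :=
  match n with
  | 0 => sink_pay H (last x0 pre)
  | n.+1 => \sum_y trans H s t x0 pre y * Vr s t n x0 (rcons pre y)
  end.

Definition Sv s t x0 pre := sup (range (fun n => Vr s t n x0 pre)).

Lemma sum_ind (a : W) (f : W -> R) : \sum_u (a == u)%:R * f u = f a.
Proof.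
rewrite (bigD1 a) //= eqxx mul1r big1 ?addr0 // => y /negbTE.
by rewrite eq_sym => ->; rewrite mul0r.
Qed.

Hypothesis gH : good.

Lemma trans_ge0 s t x0 pre y : 0 <= trans H s t x0 pre y.
Proof.
case: gH => h1 _ _; rewrite /trans.
case E: (kind H _) => //; case: ifP => // a; exact: h1.
Qed.

Lemma trans_sum1 s t x0 pre : \sum_y trans H s t x0 pre y = 1.
Proof.
case: gH => _ h2 _; rewrite /trans.
case E: (kind H _).
- by rewrite (eq_bigr (fun y => (s x0 pre == y)%:R * 1)) ?sum_ind // => y _; rewrite mulr1.
- by rewrite (eq_bigr (fun y => (t x0 pre == y)%:R * 1)) ?sum_ind // => y _; rewrite mulr1.
- exact: h2.
- by rewrite (eq_bigr (fun y => (last x0 pre == y)%:R * 1)) ?sum_ind // => y _; rewrite mulr1 eq_sym.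
Qed.

Lemma pay01 x : 0 <= sink_pay H x <= 1.
Proof.
case: gH => _ _ h3; rewrite /sink_pay; case E: (kind H x) => //; last exact: (h3 x E).
all: by rewrite lexx ler01.
Qed.

Lemma Vr01 s t n x0 pre : 0 <= Vr s t n x0 pre <= 1.
Proof.
elim: n pre => [|n IH] pre /=; first exact: pay01.
apply/andP; split.
  by apply: sumr_ge0 => y _; apply: mulr_ge0; [exact: trans_ge0| case/andP: (IH (rcons pre y))].
rewrite -(trans_sum1 s t x0 pre); apply: ler_sum => y _.
rewrite -[X in _ <= X]mulr1; apply: ler_wpM2l; first exact: trans_ge0.
by case/andP: (IH (rcons pre y)).
Qed.

Lemma Vr_sink s t n x0 pre : kind H (last x0 pre) = VSink ->
  Vr s t n x0 pre = sink_pay H (last x0 pre).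
Proof.
elim: n pre => [|n IH] pre //= hk.
rewrite /trans hk (eq_bigr (fun y => (last x0 pre == y)%:R * Vr s t n x0 (rcons pre y))).
  by rewrite sum_ind IH last_rcons.
by move=> y _; rewrite eq_sym.
Qed.

Lemma Vr_mono s t n x0 pre : Vr s t n x0 pre <= Vr s t n.+1 x0 pre.
Proof.
elim: n pre => [|n IH] pre.
  case hk: (kind H (last x0 pre)) ; try by rewrite /= /sink_pay hk; case/andP: (Vr01 s t 1 x0 pre).
  by rewrite (Vr_sink _ _ 1) //.
rewrite [Vr _ _ n.+1 _ _]/= [Vr _ _ n.+2 _ _]/=.
apply: ler_sum => y _; apply: ler_wpM2l; [exact: trans_ge0| exact: IH].
Qed.

Lemma Vr_le s t m n x0 pre : (m <= n)%N -> Vr s t m x0 pre <= Vr s t n x0 pre.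
Proof.
elim: n => [|n IH]; first by rewrite leqn0 => /eqP ->.
rewrite leq_eqVlt => /orP [/eqP -> //| ]; rewrite ltnS => /IH h.
exact: le_trans h (Vr_mono _ _ _ _ _).
Qed.

Lemma Sv_has s t x0 pre : has_sup (range (fun n => Vr s t n x0 pre)).
Proof.
split; first by exists (Vr s t 0 x0 pre), 0%N.
by exists 1 => _ [n _ <-]; case/andP: (Vr01 s t n x0 pre).
Qed.

Lemma Sv_ub s t n x0 pre : Vr s t n x0 pre <= Sv s t x0 pre.
Proof. by apply: sup_upper_bound; [exact: Sv_has| exists n]. Qed.

Lemma Sv_le s t x0 pre c : (forall n, Vr s t n x0 pre <= c) -> Sv s t x0 pre <= c.
Proof.
move=> h; apply: ge_sup; first by exists (Vr s t 0 x0 pre), 0%N.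
by move=> _ [n _ <-].
Qed.

Lemma Sv01 s t x0 pre : 0 <= Sv s t x0 pre <= 1.
Proof.
apply/andP; split.
  by apply: le_trans (Sv_ub s t 0 x0 pre); case/andP: (Vr01 s t 0 x0 pre).
by apply: Sv_le => n; case/andP: (Vr01 s t n x0 pre).
Qed.

Lemma Sv_sink s t x0 pre : kind H (last x0 pre) = VSink ->
  Sv s t x0 pre = sink_pay H (last x0 pre).
Proof.
move=> hk; apply/le_anti/andP; split.
  by apply: Sv_le => n; rewrite Vr_sink.
by rewrite -(Vr_sink s t 0) //; exact: Sv_ub.
Qed.

Lemma Bellman s t x0 pre :
  Sv s t x0 pre = \sum_y trans H s t x0 pre y * Sv s t x0 (rcons pre y).
Proof.
apply/le_anti/andP; split.
  apply: Sv_le => n; apply: le_trans (Vr_mono _ _ _ _ _) _ => /=.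
  apply: ler_sum => y _; apply: ler_wpM2l; [exact: trans_ge0| exact: Sv_ub].
apply/ler_addgt0Pr => e e0.
have: forall y, exists m, Sv s t x0 (rcons pre y) - e < Vr s t m x0 (rcons pre y).
  move=> y; have [_ [m _ <-] hm] := sup_adherent e0 (Sv_has s t x0 (rcons pre y)).
  by exists m.
case/choice => f hf.
pose M := (\max_y f y)%N.
apply: (@le_trans _ _ (Vr s t M.+1 x0 pre + e)); last by rewrite lerD2r Sv_ub.
rewrite /= -[X in _ + X]mul1r -(trans_sum1 s t x0 pre) mulr_suml -big_split /=.
apply: ler_sum => y _; rewrite -mulrDr; apply: ler_wpM2l; first exact: trans_ge0.
rewrite -lerBlDr; apply/ltW; apply: lt_le_trans (hf y) _.
by apply: Vr_le; exact: leq_bigmax.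
Qed.

End Gen.

Section Shift.
Local Open Scope ring_scope.
Variables (R : realType) (W : finType) (H : game R W).

Lemma Vr_shift (s1 t1 s2 t2 : strategy W) x0 pre1 y :
  last x0 pre1 = y ->
  (forall s, s1 x0 (pre1 ++ s) = s2 y s) ->
  (forall s, t1 x0 (pre1 ++ s) = t2 y s) ->
  forall m s, Vr H s1 t1 m x0 (pre1 ++ s) = Vr H s2 t2 m y s.
Proof.
move=> hl hs ht; elim=> [|m IH] s /=; first by rewrite last_cat hl.
apply: eq_bigr => z _; rewrite rcons_cat IH; congr (_ * _).
by rewrite /trans last_cat hl hs ht.
Qed.

Lemma value_atE (s t : strategy W) x0 n : value_at H s t x0 n = Vr H s t n x0 [::].
Proof.
rewrite /value_at.
suff: forall pre, \sum_(u : n.-tuple W) hprob H s t x0 pre u * sink_pay H (last x0 (pre ++ u))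
   = Vr H s t n x0 pre by move/(_ [::]).
elim: n => [|n IH] pre.
  rewrite (eq_bigr (fun _ => hprob H s t x0 pre [tuple] * sink_pay H (last x0 (pre ++ [tuple])))).
    by rewrite big_const card_tuple expn0 /= mul1r addr0 cats0.
  by move=> u _; rewrite tuple0.
rewrite /=.
have -> : \sum_(u : n.+1.-tuple W) hprob H s t x0 pre u * sink_pay H (last x0 (pre ++ u)) =
   \sum_(p : W * n.-tuple W) hprob H s t x0 pre [tuple of p.1 :: p.2] *
      sink_pay H (last x0 (pre ++ [tuple of p.1 :: p.2])).
  apply: (reindex (fun p : W * n.-tuple W => [tuple of p.1 :: p.2])).
  exists (fun u : n.+1.-tuple W => (thead u, behead_tuple u)).
    by move=> [a u] _ /=; congr (_, _); apply: val_inj.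
  by move=> u _; case/tupleP: u => a u; apply: val_inj.
rewrite -(pair_big xpredT xpredT (fun a (u : n.-tuple W) => hprob H s t x0 pre [tuple of a :: u] *
      sink_pay H (last x0 (pre ++ [tuple of a :: u])))) /=.
apply: eq_bigr => y _; rewrite -IH big_distrr /=; apply: eq_bigr => u _.
by rewrite mulrA cat_rcons.
Qed.

Lemma play_valueE (s t : strategy W) x0 : play_value H s t x0 = Sv H s t x0 [::].
Proof.
rewrite /play_value /Sv (_ : value_at H s t x0 = fun n => Vr H s t n x0 [::]) //.
by apply: funext => n; rewrite value_atE.
Qed.

End Shift.

Section MaxV.
Local Open Scope ring_scope.
Local Open Scope classical_set_scope.
Variables (R : realType) (W : finType) (H : game R W).
Hypothesis gH : good H.
Variables (s : strategy W) (x : W).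
Let E := [set v | exists tau, min_strategy H tau /\ v = play_value H s tau x].

Lemma E_lb : lbound E 0.
Proof. by move=> _ [t [_ ->]]; rewrite play_valueE; case/andP: (Sv01 gH s t x [::]). Qed.

Lemma maxv_le t : min_strategy H t -> max_value H s x <= play_value H s t x.
Proof. by move=> ht; apply: (ge_inf (ex_intro _ 0 E_lb)); exists t. Qed.

Lemma maxv_ge c : (exists t, min_strategy H t) ->
  (forall t, min_strategy H t -> c <= play_value H s t x) -> c <= max_value H s x.
Proof.
move=> [t0 h0] h; apply: lb_le_inf; first by exists (play_value H s t0 x), t0.
by move=> _ [t [ht ->]]; exact: h.
Qed.

Lemma maxv_adh e : (exists t, min_strategy H t) -> 0 < e ->
  exists t, min_strategy H t /\ play_value H s t x <= max_value H s x + e.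
Proof.
move=> [t0 h0] e0.
have hi : has_inf E by split; [exists (play_value H s t0 x), t0 | exists 0; exact: E_lb].
have [_ [t [ht ->]] hl] := inf_adherent e0 hi.
by exists t; split => //; apply: ltW.
Qed.

Lemma maxv01 : (exists t, min_strategy H t) -> 0 <= max_value H s x <= 1.
Proof.
move=> [t0 h0]; apply/andP; split.
  by apply: maxv_ge; [exists t0 | move=> t ht; apply: E_lb; exists t].
apply: le_trans (maxv_le h0) _; rewrite play_valueE.
by case/andP: (Sv01 gH s t0 x [::]).
Qed.

End MaxV.

Section Main.
Local Open Scope ring_scope.
Local Open Scope classical_set_scope.
Variables (R : realType) (V : finType) (G : ssg V) (A : {set V * V}) (sg sg' : V -> V).
Hypotheses (wf : ssg_wf G) (sub : A \subset arcs G)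
  (Hs : pos_max_strategy G sg) (Hs' : pos_max_strategy G sg').

Local Notation RG := (realize R G).
Local Notation w := (max_value RG (positional sg)).
Local Notation T := (transform RG A w).
Local Notation sc := (concat_strat A sg' sg).
Local Notation sT := (positional (lift_pos A sg')).

Definition emb c y : tvert A := if insub (c, y) is Some e then inr e else inl y.
Definition unl (u : tvert A) : V := match u with inl x => x | inr e => (val e).2 end.
Definition cr x0 s := has (fun e => e \in A) (hist_arcs x0 s).

Lemma arcA e : e \in A -> arc G e.1 e.2.
Proof. by move/(fintype.subsetP sub); rewrite inE. Qed.

Lemma goodRG : good RG.
Proof.
case: wf => _ _ _ hr hv; split.
- move=> x y /= k a; case: (hr x k) => hp _; rewrite ler0q; exact: ltW (hp y a).
- move=> x k /=; case: (hr x k) => _ hs.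
  by rewrite -big_mkcond /= -rmorph_sum hs rmorph1.
- move=> x k /=; case/andP: (hv x k) => a b; rewrite ler0q a /=.
  by rewrite -(rmorph1 (@ratr R)) ler_rat.
Qed.

Definition t0 : strategy V := fun x0 s => odflt (last x0 s) [pick y | arc G (last x0 s) y].

Lemma t0_min : min_strategy RG t0.
Proof.
case: wf => _ hne _ _ _.
move=> x0 s _ k; rewrite /t0; case: pickP => [y //|none].
have [y hy] : exists y, arc G (last x0 s) y by apply: hne; rewrite /= in k; rewrite k.
by rewrite none in hy.
Qed.

Lemma exRG : exists t, min_strategy RG t.
Proof. by exists t0; exact: t0_min. Qed.

Lemma w01 y : 0 <= w y <= 1.
Proof. exact: maxv01 goodRG _ _ exRG. Qed.

Lemma sig_sum (F : {e : V * V | e \in A} -> R) c :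
  \sum_e (if (val e).1 == c then F e else 0) =
  \sum_y (if (insub (c, y) : option {e : V * V | e \in A}) is Some e then F e else 0).
Proof.
have -> : \sum_y (if (insub (c, y) : option {e : V * V | e \in A}) is Some e then F e else 0) =
   \sum_y \sum_e (if val e == (c, y) then F e else 0).
  apply: eq_bigr => y _; case: insubP => [u Au vu|nA].
    rewrite -big_mkcond (big_pred1 u) // => e /=.
    by rewrite -vu val_eqE.
  rewrite big1 // => e _; case: eqP => // ve.
  by move: (valP e); rewrite ve (negbTE nA).
rewrite exchange_big; apply: eq_bigr => e _ /=.
rewrite -big_mkcond /=; case: eqP => [h1|h1].
  rewrite (big_pred1 (val e).2) // => y /=.
  by rewrite [val e]surjective_pairing h1 xpair_eqE eqxx /= eq_sym.
rewrite big_pred0 // => y; apply/negP => /eqP ve; apply: h1; by rewrite ve.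
Qed.

Lemma Trand c (f : tvert A -> R) :
  \sum_(u : tvert A) (if arc T (inl c) u then prob T (inl c) u else 0) * f u =
  \sum_y (if arc G c y then ratr (prob G c y) else 0) * f (emb c y).
Proof.
pose F (e : {e : V * V | e \in A}) := ratr (prob G c (val e).2) * f (inr e) : R.
have E1 : \sum_y (if arc G c y then ratr (prob G c y) else 0) * f (emb c y) =
   \sum_y (if arc G c y && ((c, y) \notin A) then ratr (prob G c y) else 0) * f (inl y) +
   \sum_y (if (insub (c, y) : option {e : V * V | e \in A}) is Some e then F e else 0).
  rewrite -big_split; apply: eq_bigr => y _; rewrite /emb; case: insubP => [e Ae ve|nA] /=.
    by rewrite Ae andbF mul0r add0r (arcA Ae) /F ve.
  by rewrite nA andbT addr0.
rewrite E1 -sig_sum big_sumType /=; congr (_ + _).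
by apply: eq_bigr => e _; rewrite /F; case: eqP => _; rewrite ?mul0r.
Qed.

Lemma goodT : good T.
Proof.
case: goodRG => g1 g2 g3; split.
- move=> [x|e] [y|e'] //= k.
    by move/andP => [a _]; exact: g1.
  move/eqP => h1; rewrite h1 eqxx; apply: g1 => //=.
  by have := arcA (valP e'); rewrite h1.
- move=> [x|e] k //.
  rewrite (eq_bigr (fun u => (if arc T (inl x) u then prob T (inl x) u else 0) * (fun _ => 1) u));
    last by move=> u _; rewrite mulr1.
  rewrite Trand; transitivity (\sum_y (if arc G x y then ratr (prob G x y) else 0) : R).
    by apply: eq_bigr => y _ /=; rewrite mulr1.
  exact: (g2 x k).
- move=> [x|e] //= k; first exact: g3.
  exact: w01.
Qed.


Lemma hist_arcs_cat (x0 : V) s1 s2 :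
  hist_arcs x0 (s1 ++ s2) = hist_arcs x0 s1 ++ hist_arcs (last x0 s1) s2.
Proof. by elim: s1 x0 => [|z s1 IH] x0 //=; unfold hist_arcs in *; rewrite /= IH. Qed.

Lemma size_ha (x0 : V) s : size (hist_arcs x0 s) = size s.
Proof. by elim: s x0 => [|z s IH] x0 //=; unfold hist_arcs in *; rewrite /= IH. Qed.

Lemma cr_rcons x0 pre y : cr x0 (rcons pre y) = cr x0 pre || ((last x0 pre, y) \in A).
Proof. by rewrite /cr -cats1 hist_arcs_cat has_cat /= orbF. Qed.

Lemma cr_split x0 s : cr x0 s -> exists pre y s',
  [/\ s = rcons pre y ++ s', ~~ cr x0 pre & (last x0 pre, y) \in A].
Proof.
elim: s x0 => [|z s IH] x0 //; rewrite /cr {1}/(hist_arcs x0 _) /= -/(hist_arcs z s) -/(cr z s).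
case: (boolP ((x0, z) \in A)) => [h _|h /= c].
  by exists [::], z, s.
have [pre [y [s' [-> nc yA]]]] := IH z c.
exists (z :: pre), y, s'; split => //.
by rewrite /cr {1}/(hist_arcs x0 _) /= -/(hist_arcs z pre) -/(cr z pre) negb_or h.
Qed.

Lemma path_T x0 pre : path (arc G) x0 pre -> ~~ cr x0 pre ->
  path (arc T) (inl x0) (map inl pre).
Proof.
elim: pre x0 => [|z s IH] x0 //=; rewrite /cr {1}/(hist_arcs x0 _) /= -/(hist_arcs z s) -/(cr z s).
by move=> /andP [a p]; rewrite negb_or => /andP [n1 n2]; rewrite a n1 /= IH.
Qed.

Definition is_inl (u : tvert A) := if u is inl _ then true else false.

Lemma pathT_inl u s : path (arc T) u s -> is_inl (last u s) ->
  is_inl u && path (arc G) (unl u) (map unl s).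
Proof.
elim: s u => [|v s IH] u /=; first by move=> _ ->.
move=> /andP [a p] l; have /andP [iv pv] := IH v p l; clear p l IH.
by case: u a => [x|e]; case: v iv pv => [y|e'] //= _ pv /andP [a _]; rewrite a pv.
Qed.

Lemma arc_emb c z : arc G c z -> arc T (inl c) (emb c z).
Proof. by move=> a; rewrite /emb; case: insubP => [e Ae ve|nA] /=; [rewrite ve eqxx | rewrite a nA]. Qed.

Lemma arcT_unl c v : arc T (inl c) v -> arc G c (unl v) /\ emb c (unl v) = v.
Proof.
case: v => [z|e] /=.
  by move=> /andP [a nA]; split=> //; rewrite /emb insubN.
move=> /eqP h1; split; first by have := arcA (valP e); rewrite h1.
by rewrite /emb -h1 -surjective_pairing valK.
Qed.

Definition tT_of (t : strategy V) : strategy (tvert A) :=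
  fun u s => emb (unl (last u s)) (t (unl u) (map unl s)).

Lemma tT_min t : min_strategy RG t -> min_strategy T (tT_of t).
Proof.
move=> ht u s p k.
case E: (last u s) k => [c|e] // k.
have l : is_inl (last u s) by rewrite E.
have /andP [iu pG] := pathT_inl p l; clear l.
case: u iu pG p E => [x0|//] _ pG _ E.
have lc : last x0 (map unl s) = c by rewrite -[x0]/(unl (inl x0)) last_map E.
rewrite /tT_of E /=; apply: arc_emb.
by have := ht x0 (map unl s) pG; rewrite lc; apply.
Qed.

Lemma exT : exists t, min_strategy T t.
Proof. by exists (tT_of t0); apply: tT_min t0_min. Qed.

Lemma sc_uncr x0 pre : ~~ cr x0 pre -> sc x0 pre = sg' (last x0 pre).
Proof. by rewrite /cr => h; rewrite /concat_strat (negbTE h). Qed.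

Lemma sc_cr x0 pre s : cr x0 pre -> sc x0 (pre ++ s) = sg (last x0 (pre ++ s)).
Proof. by rewrite /cr => h; rewrite /concat_strat hist_arcs_cat has_cat h. Qed.

Lemma sc_max : max_strategy RG sc.
Proof. by move=> x0 s _ k; rewrite /concat_strat; case: ifP => _; [exact: Hs | exact: Hs']. Qed.

Lemma sum_le_arc (s t : strategy V) x0 pre (a b : V -> R) :
  max_strategy RG s -> min_strategy RG t -> path (arc G) x0 pre ->
  (forall y, arc G (last x0 pre) y -> a y <= b y) ->
  \sum_y trans RG s t x0 pre y * a y <= \sum_y trans RG s t x0 pre y * b y.
Proof.
move=> hs ht p h; apply: ler_sum => y _.
case: (boolP (arc G (last x0 pre) y)) => [ay|nay].
  exact: (ler_wpM2l (trans_ge0 goodRG _ _ _ _ _) (h _ ay)).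
suff -> : trans RG s t x0 pre y = 0 by rewrite !mul0r.
case: wf => _ _ hsink _ _.
rewrite /trans; case k: (kind RG (last x0 pre)).
- case: eqP => // e; move: nay; rewrite -e; move: (hs x0 pre p k) => /= ->; done.
- case: eqP => // e; move: nay; rewrite -e; move: (ht x0 pre p k) => /= ->; done.
- by rewrite /= (negbTE nay).
- by case: eqP => // e; move: nay; rewrite e hsink // eqxx.
Qed.

Lemma sum_eps (tr a : V -> R) e : \sum_y tr y = 1 ->
  \sum_y tr y * (a y + e) = \sum_y tr y * a y + e.
Proof.
move=> h; rewrite (eq_bigr (fun y => tr y * a y + tr y * e)); last by move=> y _; rewrite mulrDr.
by rewrite big_split /= -mulr_suml h mul1r.
Qed.

Lemma transfer (t : strategy V) (tT : strategy (tvert A)) x0 pre (f : tvert A -> R) :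
  ~~ cr x0 pre -> kind G (last x0 pre) <> VSink ->
  (kind G (last x0 pre) = VMin -> tT (inl x0) (map inl pre) = emb (last x0 pre) (t x0 pre)) ->
  \sum_u trans T sT tT (inl x0) (map inl pre) u * f u =
  \sum_y trans RG sc t x0 pre y * f (emb (last x0 pre) y).
Proof.
move=> nc ns hm; rewrite /trans !last_map.
have -> : kind T (inl (last x0 pre)) = kind G (last x0 pre) by [].
have -> : kind RG (last x0 pre) = kind G (last x0 pre) by [].
move: ns hm; case k: (kind G (last x0 pre)); move=> ns hm; last by case: ns.
- rewrite sum_ind (sum_ind (sc x0 pre) (fun y => f (emb (last x0 pre) y))).
  by rewrite sc_uncr // /positional last_map.
- by rewrite sum_ind (sum_ind (t x0 pre) (fun y => f (emb (last x0 pre) y))) hm.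
- exact: Trand.
Qed.

Lemma sink_payT c : sink_pay T (inl c) = sink_pay RG c.
Proof. by rewrite /sink_pay /=. Qed.

Lemma Sv_cross (t t' : strategy V) x0 pre y :
  ~~ cr x0 pre -> (last x0 pre, y) \in A ->
  (forall s, t x0 (rcons pre y ++ s) = t' y s) ->
  forall m, Vr RG sc t m x0 (rcons pre y) = Vr RG (positional sg) t' m y [::].
Proof.
move=> nc yA ht m; rewrite -[rcons pre y]cats0; apply: Vr_shift => //.
- by rewrite last_rcons.
- move=> s; rewrite sc_cr ?cr_rcons ?yA ?orbT //.
  by rewrite /positional last_cat last_rcons.
Qed.

Lemma tres_minP t x0 pre y : min_strategy RG t -> path (arc G) x0 pre -> arc G (last x0 pre) y ->
  min_strategy RG (fun y0 s => if y0 == y then t x0 (rcons pre y ++ s) else t0 y0 s).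
Proof.
move=> ht p a y0 s ps k; case: eqP => [e0|_]; last exact: t0_min.
subst y0.
have hp : path (arc G) x0 (rcons pre y ++ s) by rewrite cat_path rcons_path p a last_rcons.
have hk : kind RG (last x0 (rcons pre y ++ s)) = VMin by rewrite last_cat last_rcons.
by have := ht _ _ hp hk; rewrite last_cat last_rcons.
Qed.

Section Dir1.
Variables (t : strategy V).
Hypothesis ht : min_strategy RG t.
Local Notation tT := (tT_of t).

Lemma tT_at x0 pre : tT (inl x0) (map inl pre) = emb (last x0 pre) (t x0 pre).
Proof.
have K : cancel (@inl V {e : V * V | e \in A}) unl by [].
by rewrite /tT_of last_map /= (mapK K).
Qed.

Lemma claim1 N : forall x0 pre, path (arc G) x0 pre -> ~~ cr x0 pre ->
  Vr T sT tT N (inl x0) (map inl pre) <= Sv RG sc t x0 pre.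
Proof.
elim: N => [|N IH] x0 pre p nc.
  rewrite /= last_map sink_payT.
  exact: (Sv_ub goodRG sc t 0 x0 pre).
case sk: (kind G (last x0 pre)) => [| | |].
4: by rewrite Vr_sink last_map // sink_payT (Sv_sink goodRG).
all: have ns : kind G (last x0 pre) <> VSink by rewrite sk.
all: rewrite [Vr _ _ _ N.+1 _ _]/=.
all: rewrite (@transfer t (tT_of t) x0 pre (fun u => Vr T sT tT N (inl x0) (rcons (map inl pre) u))) //;
  last by move=> _; exact: tT_at.
all: rewrite (Bellman goodRG sc t x0 pre); apply (sum_le_arc sc_max ht p) => y a.
all: rewrite /emb; case: insubP => [e yA ve|nA] /=.
all: try (rewrite -map_rcons; apply: IH; [by rewrite rcons_path p a | by rewrite cr_rcons negb_or nc nA]).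
all: rewrite Vr_sink ?last_rcons // /sink_pay /= ve /=.
all: pose tres : strategy V := fun y0 s => if y0 == y then t x0 (rcons pre y ++ s) else t0 y0 s.
all: have tres_min : min_strategy RG tres by exact: tres_minP.
all: apply: le_trans (maxv_le goodRG _ _ tres_min) _; rewrite play_valueE.
all: have hS : forall m, Vr RG sc t m x0 (rcons pre y) = Vr RG (positional sg) tres m y [::]
  by apply: Sv_cross => // s; rewrite /tres eqxx.
all: suff -> : Sv RG (positional sg) tres y [::] = Sv RG sc t x0 (rcons pre y) by [].
all: rewrite /Sv; apply: (f_equal (fun F : nat -> R => sup (range F))); apply: funext => m; by rewrite hS.
Qed.

End Dir1.

Section Dir2.
Variables (tT : strategy (tvert A)) (eps : R) (ts : V -> strategy V).
Hypotheses (htT : min_strategy T tT) (e0 : 0 < eps)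
  (hts : forall y, min_strategy RG (ts y) /\ play_value RG (positional sg) (ts y) y <= w y + eps).

Definition tG : strategy V := fun x0 s =>
  let i := find (fun e => e \in A) (hist_arcs x0 s) in
  if (i < size s)%N then ts (nth x0 s i) (nth x0 s i) (drop i.+1 s)
  else unl (tT (inl x0) (map inl s)).

Lemma tG_uncr x0 s : ~~ cr x0 s -> tG x0 s = unl (tT (inl x0) (map inl s)).
Proof. by move=> h; rewrite /tG (hasNfind h) size_ha ltnn. Qed.

Lemma tG_cross x0 pre y s : ~~ cr x0 pre -> (last x0 pre, y) \in A ->
  tG x0 (rcons pre y ++ s) = ts y y s.
Proof.
move=> nc yA.
have hf : find (fun e => e \in A) (hist_arcs x0 (rcons pre y ++ s)) = size pre.
  rewrite hist_arcs_cat find_cat.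
  have -> : has (fun e => e \in A) (hist_arcs x0 (rcons pre y)) by rewrite -/(cr _ _) cr_rcons yA orbT.
  rewrite -cats1 hist_arcs_cat find_cat.
  move: nc; rewrite /cr => /negbTE ->; rewrite size_ha /= yA addn0 //.
rewrite /tG hf size_cat size_rcons (leq_trans (ltnSn _) (leq_addr _ _)).
rewrite nth_cat size_rcons ltnSn nth_rcons ltnn eqxx.
by rewrite drop_cat size_rcons ltnn subnn drop0.
Qed.

Lemma tG_min : min_strategy RG tG.
Proof.
move=> x0 s p k; case: (boolP (cr x0 s)) => c.
  have [pre [y [s' [E nc yA]]]] := cr_split c.
  rewrite E tG_cross //; case: (hts y) => hm _.
  move: p k; rewrite E cat_path last_cat last_rcons => /andP [_ p'] k.
  exact: hm y s' p' k.
rewrite tG_uncr //.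
have pT := path_T p c.
have k' : kind T (last (inl x0) (map inl s)) = VMin by rewrite last_map.
have := htT pT k'; rewrite last_map => /arcT_unl [a _]; exact: a.
Qed.

Lemma tT_at2 x0 pre : path (arc G) x0 pre -> ~~ cr x0 pre -> kind G (last x0 pre) = VMin ->
  tT (inl x0) (map inl pre) = emb (last x0 pre) (tG x0 pre).
Proof.
move=> p nc k; rewrite tG_uncr //.
have k' : kind T (last (inl x0) (map inl pre)) = VMin by rewrite last_map.
by have := htT (path_T p nc) k'; rewrite last_map => /arcT_unl [_ ->].
Qed.

Lemma claim2 N : forall x0 pre, path (arc G) x0 pre -> ~~ cr x0 pre ->
  Vr RG sc tG N x0 pre <= Sv T sT tT (inl x0) (map inl pre) + eps.
Proof.
have base : forall x0 pre, sink_pay RG (last x0 pre) <= Sv T sT tT (inl x0) (map inl pre) + eps.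
  move=> x0 pre; rewrite -[X in X <= _]addr0; apply: lerD; last exact: ltW.
  have := Sv_ub goodT sT tT 0 (inl x0) (map inl pre); rewrite /= last_map sink_payT //.
elim: N => [|N IH] x0 pre p nc; first exact: base.
case sk: (kind G (last x0 pre)) => [| | |].
4: by rewrite Vr_sink.
all: have ns : kind G (last x0 pre) <> VSink by rewrite sk.
all: rewrite [Vr _ _ _ N.+1 _ _]/=.
all: rewrite (Bellman goodT sT tT (inl x0) (map inl pre)).
all: rewrite (@transfer tG tT x0 pre (fun u => Sv T sT tT (inl x0) (rcons (map inl pre) u))) //;
  last by move=> k; exact: tT_at2 p nc k.
all: rewrite -(sum_eps _ _ (trans_sum1 goodRG sc tG x0 pre)).
all: apply (sum_le_arc sc_max tG_min p) => y a.
all: rewrite /emb; case: insubP => [e yA ve|nA] /=.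
all: try (rewrite -map_rcons; apply: IH; [by rewrite rcons_path p a | by rewrite cr_rcons negb_or nc nA]).
all: rewrite (Sv_sink goodT) ?last_rcons // /sink_pay /= ve /=.
all: case: (hts y) => hm hp.
all: apply: le_trans hp; rewrite play_valueE.
all: rewrite (@Sv_cross tG (ts y)) //; first exact: (Sv_ub goodRG).
all: by move=> s; rewrite tG_cross.
Qed.

End Dir2.

Lemma main x : max_value RG sc x = max_value T sT (inl x).
Proof.
apply/le_anti/andP; split.
  apply/ler_addgt0Pr => e e0.
  rewrite -lerBlDr; apply: maxv_ge; first exact: exT.
  move=> tT htT; rewrite lerBlDr.
  have : forall y, exists t, min_strategy RG t /\ play_value RG (positional sg) t y <= w y + e.
    by move=> y; have [t [h1 h2]] := maxv_adh goodRG (positional sg) y exRG e0; exists t.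
  case/choice => ts hts.
  apply: le_trans (maxv_le goodRG _ _ (tG_min htT hts)) _.
  rewrite !play_valueE; apply: Sv_le => N.
  by apply: (claim2 htT e0 hts).
apply: maxv_ge; first exact: exRG.
move=> t ht; apply: le_trans (maxv_le goodT _ _ (tT_min ht)) _.
rewrite !play_valueE; apply: Sv_le => N.
by have := @claim1 t ht N x [::]; apply.
Qed.

End Main.

Unset Implicit Arguments.

Theorem lemma16 (R : realType) (V : finType) (G : ssg V) (A : {set V * V})
    (sigma sigma' : V -> V) :
  ssg_wf G ->
  A \subset arcs G ->
  pos_max_strategy G sigma ->
  pos_max_strategy G sigma' ->
  forall x : V,
    max_value (realize R G) (concat_strat A sigma' sigma) x =
    max_value
      (transform (realize R G) A (max_value (realize R G) (positional sigma)))
      (positional (lift_pos A sigma')) (inl x).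
Proof.
move=> wf sub Hs Hs' x; exact: main.
Qed.
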